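(* If $T\in\mathcal{T}_3$ is a tree with $n\ge 30$ vertices, then either there is an edge $e$ of $T$ with $2\alpha(T,e)\ge n\,\bar{\alpha}(T,e)$, or there is an internal vertex $v$ of $T$ with $2\alpha(T,v)\ge n\,\bar{\alpha}(T,v)$.
   Context: A leaf is a vertex of degree at most 1; an internal vertex has degree at least 2. $\mathcal{T}_3$ is the set of finite trees with at least one internal vertex in which every internal vertex has degree at least 3. A subtree is a nonempty vertex set inducing a connected subgraph. For a vertex $v$, $\alpha(T,v)$ and $\bar{\alpha}(T,v)$ are the numbers of subtrees of $T$ containing and not containing $v$, respectively; for an edge $e$, $\alpha(T,e)$ and $\bar{\alpha}(T,e)$ are the numbers of subtrees containing and not containing $e$ (i.e. containing both endpoints of $e$, or not). *)

(* Defs.v *)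
From mathcomp Require Import all_boot.
Set Implicit Arguments.
Unset Strict Implicit.
Unset Printing Implicit Defensive.

Section Trees.
Variable T : finType.
Variable adj : rel T.

Definition simple_graph : Prop := symmetric adj /\ irreflexive adj.

Definition adj_in (S : {set T}) : rel T :=
  fun x y => [&& x \in S, y \in S & adj x y].

Definition connected_set (S : {set T}) : bool :=
  [forall x in S, forall y in S, connect (adj_in S) x y].

Definition n_edges : nat := #|[set p : T * T | adj p.1 p.2]| %/ 2.

Definition is_tree : Prop :=
  simple_graph /\ 0 < #|T| /\ connected_set [set: T] /\ n_edges = #|T| - 1.

Definition deg (v : T) : nat := #|[set w | adj v w]|.
Definition internal (v : T) : bool := 2 <= deg v.

Definition in_T3 : Prop :=
  is_tree /\ (exists v, internal v) /\ (forall v, internal v -> 3 <= deg v).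

Definition subtree (S : {set T}) : bool := (S != set0) && connected_set S.

Definition alpha_v (v : T) : nat := #|[set S | subtree S & v \in S]|.
Definition alphabar_v (v : T) : nat := #|[set S | subtree S & v \notin S]|.
(* edge {u, w}: a subtree contains it iff it contains both endpoints *)
Definition alpha_e (u w : T) : nat :=
  #|[set S | subtree S & (u \in S) && (w \in S)]|.
Definition alphabar_e (u w : T) : nat :=
  #|[set S | subtree S & ~~ ((u \in S) && (w \in S))]|.
End Trees.

(* Main.v *)
Require Import Defs.
From mathcomp Require Import all_boot zify.
Set Implicit Arguments. Unset Strict Implicit. Unset Printing Implicit Defensive.

Lemma N0 (I : eqType) (f : I -> nat) (s : seq I) : (forall d, d \in s -> 0 < f d) ->
  s != [::] -> exists m, \sum_(d <- s) f d = m + size s /\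
  \sum_(d <- s) 2 ^ f d + 2 <= 2 * 2 ^ m + 2 * size s.
Proof.
elim: s => [|x s IH] // hf _.
have fx : 0 < f x by apply: hf; rewrite inE eqxx.
have [x1 ex] : exists x1, f x = x1.+1 by exists (f x).-1; lia.
case: s IH hf => [|y s'] IH hf.
  exists x1; rewrite !big_cons !big_nil ex /= expnS; lia.
have [|//|m' [e1 e2]] := IH.
  by move=> d dd; apply: hf; rewrite inE dd orbT.
exists (x1 + m'); rewrite big_cons [X in X + 2 <= _]big_cons ex e1 /=.
split; first by lia.
move: e2; set S := \sum_(d <- _) _.
rewrite expnS expnD /= => e2.
have hX : 0 < 2 ^ x1 by rewrite expn_gt0.
have hM : 0 < 2 ^ m' by rewrite expn_gt0.
move: hX hM e2; move: (2 ^ x1) (2 ^ m') => X M hX hM e2.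
nia.
Qed.

Lemma N1 (I : eqType) (f g : I -> nat) (s : seq I) :
  (forall d, d \in s -> 0 < f d /\ g d + 4 <= 3 * 2 ^ f d) -> 2 <= size s ->
  2 ^ (\sum_(d <- s) f d) + \sum_(d <- s) g d + 4 <= 3 * 2 ^ (\sum_(d <- s) f d).
Proof.
move=> h hs.
have hs0 : s != [::] by apply/eqP => e; rewrite e in hs.
have [m [e1 e2]] := N0 (fun d dd => (h d dd).1) hs0.
have e3 : \sum_(d <- s) g d + 4 * size s <= 3 * \sum_(d <- s) 2 ^ f d.
  have e4 : \sum_(d <- s) 4 = 4 * size s.
    by rewrite -sum1_size big_distrr /=; apply: eq_bigr => ? _; rewrite muln1.
  have : \sum_(d <- s) (g d + 4) <= \sum_(d <- s) 3 * 2 ^ f d.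
    rewrite big_seq_cond [X in _ <= X]big_seq_cond; apply: leq_sum => d /andP[dd _].
    by have [_ ?] := h d dd; lia.
  by rewrite big_split /= -big_distrr /= e4.
rewrite e1 expnD.
move: e2 e3; set S := \sum_(d <- s) 2 ^ f d; set G := \sum_(d <- s) g d.
move: (size s) hs => k hk e2 e3.
have hK : k + 2 <= 2 ^ k.
  elim: k hk {e2 e3} => // k IHk; rewrite ltnS leq_eqVlt => /orP[/eqP <- //|hk].
  by rewrite expnS; have := IHk hk; lia.
have hM : 0 < 2 ^ m by rewrite expn_gt0.
move: hK hM e2; move: (2 ^ k) (2 ^ m) => K M hK hM e2.
nia.
Qed.

Lemma N2 x h : 0 < x -> x <= h -> 2 ^ x * h <= x * 2 ^ h.
Proof.
move=> hx /subnKC <-; elim: (h - x) => [|d IH]; first by rewrite addn0 mulnC.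
rewrite addnS expnS mulnS.
have : 2 ^ x <= 2 ^ (x + d) by rewrite leq_exp2l // leq_addr.
have : 1 <= x by [].
move: IH; move: (2 ^ x) (2 ^ (x + d)) => A Bv; nia.
Qed.

Lemma N3 h : 8 <= h -> 12 * (2 * h + 1) <= 2 ^ h.+1.
Proof.
elim: h => // h IH; rewrite ltnS leq_eqVlt => /orP[/eqP <- //|hh].
by rewrite expnS; have := IH hh; lia.
Qed.

Lemma N4 L n : 16 <= L -> n + 2 <= 2 * L -> 3 * L * n * 2 ^ L./2 <= L./2 * 2 ^ L.+1.
Proof.
move=> hL hn.
have eL : L = L./2.*2 + odd L by rewrite addnC odd_double_half.
set h := L./2 in eL *.
have hh : 8 <= h by move: hL; rewrite eL; case: (odd L) => /=; lia.
have e2 : 2 ^ h * 2 ^ h.+1 <= 2 ^ L.+1.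
  by rewrite -expnD leq_exp2l //; move: eL; case: (odd L) => /=; lia.
have h3 := N3 hh.
have hL2 : L <= 2 * h + 1 by move: eL; case: (odd L) => /=; lia.
have hn2 : n <= 4 * h by lia.
apply: (@leq_trans (h * (2 ^ h * 2 ^ h.+1))); last by rewrite leq_mul2l e2 orbT.
move: e2 h3; move: (2 ^ h) (2 ^ h.+1) => A Bv _ h3.
have : 3 * L * n <= h * Bv.
  have : 3 * L * n <= 12 * h * (2 * h + 1) by nia.
  nia.
nia.
Qed.

Section Root.
Variables (T : finType) (adj : rel T).
Hypothesis sym : symmetric adj.
Hypothesis irr : irreflexive adj.
Hypothesis conn : forall x y, connect adj x y.
Hypothesis nE : #|[set q : T * T | adj q.1 q.2]| %/ 2 = #|T| - 1.
Variable r : T.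

Definition Pk x (k : nat) : bool :=
  [exists s : k.-tuple T, path adj x s && (last x s == r)].
Lemma exPk x : exists k, Pk x k.
Proof.
case/connectP: (conn x r) => s ps lr; exists (size s); apply/existsP.
by exists (in_tuple s); rewrite /= ps -lr eqxx.
Qed.
Definition dep x := ex_minn (exPk x).
Lemma depP x : Pk x (dep x). Proof. by rewrite /dep; case: ex_minnP. Qed.
Lemma dep_min x k : Pk x k -> dep x <= k.
Proof. by rewrite /dep; case: ex_minnP => m _ H; exact: H. Qed.
Lemma dep_r : dep r = 0.
Proof. apply/eqP; rewrite -leqn0; apply: dep_min; apply/existsP.
by exists [tuple]; rewrite /= eqxx. Qed.
Lemma dep0 x : dep x = 0 -> x = r.
Proof.
move=> H; have := depP x; rewrite H; case/existsP => s /andP[_ /eqP].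
by rewrite (tuple0 s).
Qed.
Lemma dep_adj x y : adj x y -> dep x <= (dep y).+1.
Proof.
move=> a; case/existsP: (depP y) => s /andP[ps ls]; apply: dep_min.
by apply/existsP; exists [tuple of y :: s]; rewrite /= a ps.
Qed.
Lemma dep_down x : x != r -> exists2 y, adj x y & (dep y).+1 = dep x.
Proof.
move=> xr; case/existsP: (depP x) => t /andP[].
case: t => ss sz /= ps ls; move: ss sz ps ls => [|y s] /eqP /= sz ps ls.
  by rewrite (eqP ls) eqxx in xr.
case/andP: ps => a ps; exists y => //.
have h1 : dep y <= size s.
  by apply: dep_min; apply/existsP; exists (in_tuple s); rewrite /= ps ls.
have h2 := dep_adj a. lia.
Qed.
Definition p x := odflt x [pick y | adj x y && ((dep y).+1 == dep x)].
Lemma pP x : x != r -> adj x (p x) /\ (dep (p x)).+1 = dep x.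
Proof.
move=> xr; rewrite /p; case: pickP => [y /andP[a /eqP e]|H]; first by [].
case: (dep_down xr) => y a e; have := H y; by rewrite a e eqxx.
Qed.
Lemma p_r : p r = r.
Proof. rewrite /p; case: pickP => // y /andP[_]; by rewrite dep_r. Qed.
Lemma dep_pos x : x != r -> 0 < dep x.
Proof. by move=> /pP [_ <-]. Qed.

Definition Par1 := [set (x, p x) | x in [set~ r]].
Definition Par2 := [set (p x, x) | x in [set~ r]].
Lemma inPar1 a b : ((a, b) \in Par1) = (a != r) && (b == p a).
Proof.
apply/imsetP/andP => [[x xr [-> ->]]|[ar /eqP ->]]; last by exists a; rewrite ?in_setC1.
by rewrite -in_setC1.
Qed.
Lemma inPar2 a b : ((a, b) \in Par2) = (b != r) && (a == p b).
Proof.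
apply/imsetP/andP => [[x xr [-> ->]]|[ar /eqP ->]]; last by exists b; rewrite ?in_setC1.
by rewrite -in_setC1.
Qed.

Lemma foo m n : m %/ 2 = n - 1 -> 1 + (1 + (n-1 + (n-1))) <= m -> 0 < n -> False.
Proof. lia. Qed.

Lemma edge_par x y : adj x y -> (x != r) && (y == p x) || (y != r) && (x == p y).
Proof.
move=> a; apply/negPn/negP => H.
set E := [set q : T * T | adj q.1 q.2].
set P := Par1 :|: Par2.
have c1 : #|Par1| = #|T|.-1.
  by rewrite card_imset ?cardsC1 // => u v [].
have c2 : #|Par2| = #|T|.-1.
  by rewrite card_imset ?cardsC1 // => u v [].
have dis : Par1 :&: Par2 = set0.
  apply/setP => -[u v]; rewrite inE inPar1 inPar2 in_set0.
  apply/negP => /andP[/andP[ur /eqP e1] /andP[vr /eqP e2]].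
  have [_ d1] := pP ur; have [_ d2] := pP vr.
  rewrite -e1 in d1; rewrite -e2 in d2; lia.
have cP : #|P| = (#|T|.-1).*2.
  by have := cardsUI Par1 Par2; rewrite dis cards0 c1 c2 addn0 -addnn.
have nxy : (x, y) \notin P by rewrite !inE inPar1 inPar2.
have nyx : (y, x) \notin P by rewrite !inE inPar1 inPar2 orbC.
have sub : (x, y) |: ((y, x) |: P) \subset E.
  apply/subsetP => -[u v]; rewrite !inE.
  case/orP => [/andP[/eqP -> /eqP ->] //|]; case/orP => [/andP[/eqP -> /eqP ->]|].
    by rewrite sym.
  rewrite inPar1 inPar2; case/orP => /andP[ur /eqP ->].
    by have [] := pP ur.
  by have [] := pP ur; rewrite sym.
have := subset_leq_card sub.
have n1 : (x, y) \notin (y, x) |: P.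
  rewrite in_setU1 negb_or nxy andbT; apply/eqP => -[e _].
  by move: a; rewrite -e irr.
rewrite cardsU1 (negbTE n1) cardsU1 (negbTE nyx) cP /= => h.
have n0 : 0 < #|T| by apply/card_gt0P; exists x.
move: h; rewrite -subn1 -addnn => h; exact: (foo nE h n0).
Qed.
End Root.

Section Desc.
Variables (T : finType) (adj : rel T).
Hypothesis sym : symmetric adj.
Hypothesis irr : irreflexive adj.
Hypothesis conn : forall x y, connect adj x y.
Hypothesis nE : #|[set q : T * T | adj q.1 q.2]| %/ 2 = #|T| - 1.
Variable r : T.
Local Notation dep := (dep conn r).
Local Notation p := (p conn r).

Definition desc t := [set x | (dep t <= dep x) && (iter (dep x - dep t) p x == t)].

Lemma dep_p x : x != r -> dep (p x) = (dep x).-1.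
Proof. by move=> /(pP conn nE) [_ <-]. Qed.
Lemma dep_nr x : 0 < dep x -> x != r.
Proof. by apply: contraTneq => ->; rewrite dep_r. Qed.
Lemma iter_dep k x : k <= dep x -> dep (iter k p x) = dep x - k.
Proof.
elim: k => [|k IH] hk; first by rewrite subn0.
rewrite iterS dep_p; first by rewrite IH ?(ltnW hk) //; lia.
by apply: dep_nr; rewrite IH ?(ltnW hk) //; lia.
Qed.
Lemma descP x t : reflect (exists2 k, k <= dep x & iter k p x = t) (x \in desc t).
Proof.
apply: (iffP idP).
  by rewrite inE => /andP[le /eqP e]; exists (dep x - dep t) => //; rewrite leq_subr.
move=> [k hk <-]; rewrite inE iter_dep // leq_subr /= subKn //.
Qed.
Lemma desc_refl t : t \in desc t.
Proof. by apply/descP; exists 0. Qed.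
Lemma desc_dep x t : x \in desc t -> dep t <= dep x.
Proof. by rewrite inE => /andP[]. Qed.
Lemma desc_eq x t : x \in desc t -> dep x = dep t -> x = t.
Proof. by move=> xd e; move: xd; rewrite inE e subnn => /andP[_ /eqP <-]. Qed.
Lemma desc_p x t : x \in desc t -> x != t -> p x \in desc t.
Proof.
case/descP => -[|k] hk e; first by rewrite -e eqxx.
move=> _; apply/descP; exists k; last by rewrite -iterSr.
by rewrite dep_p ?dep_nr //; lia.
Qed.
Lemma desc_child y t : y != r -> p y \in desc t -> y \in desc t.
Proof.
move=> yr /descP [k hk e]; apply/descP; exists k.+1; last by rewrite iterSr.
by move: hk; rewrite dep_p //; have := dep_pos conn nE yr; lia.
Qed.
Lemma desc_trans x y t : x \in desc y -> y \in desc t -> x \in desc t.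
Proof.
move=> /descP [k1 h1 e1] /descP [k2 h2 e2]; apply/descP; exists (k2 + k1).
  by move: h2; rewrite -e1 iter_dep //; lia.
by rewrite iterD e1.
Qed.
Lemma desc_r x : x \in desc r.
Proof.
apply/descP; exists (dep x) => //; apply: (@dep0 _ _ conn); by rewrite iter_dep // subnn.
Qed.
Lemma not_desc_p t : t != r -> p t \notin desc t.
Proof.
move=> tr; apply/negP => /desc_dep; rewrite dep_p //; have := dep_pos conn nE tr; lia.
Qed.
Lemma boundary x y t : adj x y -> x \in desc t -> y \notin desc t ->
  [/\ x = t, t != r & y = p t].
Proof.
move=> a xt yt.
case/orP: (@edge_par _ _ sym irr conn nE r _ _ a) => /andP[xr /eqP ey].
  case: (x =P t) => [ext|neq]; first by subst.
  by have := desc_p xt (introN eqP neq); rewrite -ey (negbTE yt).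
by have := @desc_child y t xr; rewrite -ey xt (negbTE yt) => /(_ isT).
Qed.
Lemma anc_uniq x a b : x \in desc a -> x \in desc b -> dep a = dep b -> a = b.
Proof. by move=> xa xb e; move: xa xb; rewrite !inE e => /andP[_ /eqP ->] /andP[_ /eqP ->]. Qed.

Lemma adj_inS (S : {set T}) : symmetric (adj_in adj S).
Proof. by move=> x y; rewrite /adj_in sym; case: (x \in S); case: (y \in S). Qed.

Lemma conn_up (S : {set T}) t : t \in S -> S \subset desc t ->
  (forall x, x \in S -> x != t -> p x \in S) ->
  forall x, x \in S -> connect (adj_in adj S) x t.
Proof.
move=> tS sub cl.
suff H : forall n x, dep x <= n -> x \in S -> connect (adj_in adj S) x t.
  by move=> x; apply: H (leqnn _).
elim => [|n IH] x hx xS.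
  have xd := subsetP sub x xS; have := desc_dep xd => le.
  by rewrite (desc_eq xd) ?connect0 //; lia.
case: (x =P t) => [->|ne]; first exact: connect0.
have xd := subsetP sub x xS.
have xr : x != r.
  apply: dep_nr; have := desc_dep xd; have: dep x <> dep t by move/(desc_eq xd).
  lia.
have pS := cl x xS (introN eqP ne).
apply: connect_trans (connect1 _) (IH _ _ pS).
  by rewrite /adj_in xS pS; case: (pP conn nE xr).
by rewrite dep_p //; lia.
Qed.

Lemma conn_of_closed (S : {set T}) t : t \in S -> S \subset desc t ->
  (forall x, x \in S -> x != t -> p x \in S) -> connected_set adj S.
Proof.
move=> tS sub cl; apply/forallP => x; apply/implyP => xS.
apply/forallP => y; apply/implyP => yS.
apply: connect_trans (conn_up tS sub cl xS) _.
by rewrite (sym_connect_sym (adj_inS S)) (conn_up tS sub cl yS).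
Qed.

Lemma reach_desc (S : {set T}) u y : p u \notin S ->
  connect (adj_in adj S) u y -> y \in desc u.
Proof.
move=> pu /connectP [s ps ->].
suff H : forall s a, a \in desc u -> path (adj_in adj S) a s -> last a s \in desc u.
  by apply: H ps; exact: desc_refl.
elim => [|b s' IH] a ha //= /andP[ab ps']; apply: IH ps'.
case/and3P: ab => _ bS ab'; apply/negPn/negP => nb.
by case: (boundary ab' ha nb) => _ _ eb; rewrite -eb bS in pu.
Qed.

Lemma closed_of_conn (S : {set T}) t : connected_set adj S -> t \in S ->
  S \subset desc t -> forall x, x \in S -> x != t -> p x \in S.
Proof.
move=> cS tS sub x xS xt; apply/negPn/negP => pxS.
have c : connect (adj_in adj S) x t.
  by move/forallP: cS => /(_ x) /implyP /(_ xS) /forallP /(_ t) /implyP /(_ tS).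
have tx := reach_desc pxS c.
have xd := subsetP sub x xS.
have := desc_dep tx; have := desc_dep xd => h1 h2.
by move: xt; rewrite (desc_eq xd) ?eqxx //; lia.
Qed.

Lemma top_exists (S : {set T}) : subtree adj S -> r \notin S ->
  exists2 t, t \in S & (t != r) && (S \subset desc t).
Proof.
case/andP => /set0Pn [x0 x0S] cS rS.
case: (arg_minnP dep x0S) => t tS tmin.
have tr : t != r by apply: contraNneq rS => <-.
exists t => //; rewrite tr /=.
have pt : p t \notin S.
  apply/negP => /tmin; rewrite dep_p //; have := dep_pos conn nE tr; lia.
apply/subsetP => y yS; apply: (reach_desc pt).
by move/forallP: cS => /(_ t) /implyP /(_ tS) /forallP /(_ y) /implyP /(_ yS).
Qed.

Definition ch t := [set d | (d != r) && (p d == t)].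
Definition ca t x := iter (dep x - dep t).-1 p x.

Lemma ca_spec t x : x \in desc t -> x != t ->
  [/\ ca t x != r, p (ca t x) = t & x \in desc (ca t x)].
Proof.
move=> xd xt.
have hdt := desc_dep xd.
have hne : dep x <> dep t by move/(desc_eq xd)/eqP; rewrite (negbTE xt).
have dca : dep (ca t x) = (dep t).+1 by rewrite /ca iter_dep; lia.
split.
- by apply: dep_nr; rewrite dca.
- move: xd; rewrite inE => /andP[_ /eqP e]; rewrite /ca -iterS.
  by have -> : ((dep x - dep t).-1).+1 = dep x - dep t by lia.
- by apply/descP; exists (dep x - dep t).-1 => //; lia.
Qed.

Lemma ch_desc d t : d \in ch t -> d \in desc t.
Proof.
rewrite inE => /andP[dr /eqP e]; apply: desc_child => //; rewrite e; exact: desc_refl.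
Qed.
Lemma ch_dep d t : d \in ch t -> dep d = (dep t).+1.
Proof.
rewrite inE => /andP[dr /eqP e]; have := dep_p dr; rewrite e; have := dep_pos conn nE dr.
lia.
Qed.

Lemma desc_ch d t x : d \in ch t -> x \in desc d ->
  [/\ x \in desc t, x != t & ca t x = d].
Proof.
move=> dch xd.
have xt : x \in desc t by apply: desc_trans xd (ch_desc dch).
have hd := ch_dep dch; have hx := desc_dep xd.
have xnt : x != t by apply/eqP => e; move: hx; rewrite e hd; lia.
split => //.
case: (ca_spec xt xnt) => car pca xca.
apply: anc_uniq xca xd _.
rewrite hd /ca iter_dep; [lia|].
by have := desc_dep xt; lia.
Qed.

Lemma sum_desc (F : T -> nat) t :
  \sum_(x in desc t) F x = F t + \sum_(d in ch t) \sum_(x in desc d) F x.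
Proof.
rewrite (bigD1 t) ?desc_refl //=; congr (_ + _).
rewrite (partition_big (ca t) (mem (ch t))) /=.
  apply: eq_bigr => d dch; apply: eq_bigl => x.
  apply/idP/idP => [/andP[/andP[xd xt] /eqP e]|xd].
    by case: (ca_spec xd xt) => _ _; rewrite e.
  by case: (desc_ch dch xd) => -> -> ->; rewrite eqxx.
move=> x /andP[xd xt]; case: (ca_spec xd xt) => car pca _.
by rewrite inE car pca eqxx.
Qed.
End Desc.

Section Count.
Variables (T : finType) (adj : rel T).
Hypothesis sym : symmetric adj.
Hypothesis irr : irreflexive adj.
Hypothesis conn : forall x y, connect adj x y.
Hypothesis nE : #|[set q : T * T | adj q.1 q.2]| %/ 2 = #|T| - 1.
Hypothesis hT3 : forall v, internal adj v -> 3 <= deg adj v.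
Variable r : T.
Local Notation dep := (dep conn r).
Local Notation p := (p conn r).
Local Notation desc := (desc conn r).
Local Notation ch := (ch conn r).

Definition Lf := [set x | ~~ internal adj x].
Definition B u c := [set x | connect (adj_in adj (~: [set u])) c x].
Definition N x := [set w | adj x w].

Lemma adjp x : x != r -> adj x (p x).
Proof. by move=> xr; case: (pP conn nE xr). Qed.

Lemma desc_B t : t != r -> desc t = B (p t) t.
Proof.
move=> tr; apply/setP => x; rewrite [in RHS]inE; apply/idP/idP => [xd|xB].
  have c := conn_up nE (desc_refl conn nE r t) (subxx _) (fun y => @desc_p _ _ conn nE r y t) xd.
  rewrite (sym_connect_sym (adj_inS sym _)) in c.
  apply: connect_sub c => y z /and3P [yd zd a]; apply: connect1.
  rewrite /adj_in a !inE andbT.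
  by apply/andP; split; apply: contraNneq (not_desc_p conn nE tr) => <-.
by apply: (reach_desc sym irr nE (S := ~: [set p t])) => //; rewrite !inE eqxx.
Qed.

Lemma r_notin_desc u : u != r -> r \notin desc u.
Proof. by move=> ur; apply/negP => /(desc_dep) ; rewrite dep_r; have := dep_pos conn nE ur; lia. Qed.

Lemma ch_irr u : u \in ch u -> False.
Proof.
rewrite inE => /andP[ur /eqP e]; have := dep_p conn nE ur; rewrite e.
have := dep_pos conn nE ur; lia.
Qed.

Lemma B_compl' u : u \in ch r -> B u r = ~: desc u.
Proof.
move=> uch; have ur : u != r by move: uch; rewrite inE => /andP[].
apply/setP => x; rewrite [in LHS]inE [in RHS]inE; apply/idP/idP => [xB|xd].
  case/connectP: xB => s ps ->.
  suff H : forall s a, a \notin desc u -> path (adj_in adj (~: [set u])) a s ->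
      last a s \notin desc u by apply: H ps; exact: r_notin_desc.
  elim => [|b s' IH] a ha //= /andP[ab ps']; apply: IH ps'.
  case/and3P: ab => _ bS ab'; apply/negP => bd.
  have ba : adj b a by rewrite sym.
  have [eb _ _] := boundary sym irr nE ba bd ha.
  by move: bS; rewrite !inE eb eqxx.
set S := ~: desc u.
have rS : r \in S by rewrite inE r_notin_desc.
have sub : S \subset desc r by apply/subsetP => y _; exact: desc_r.
have cl : forall y, y \in S -> y != r -> p y \in S.
  move=> y; rewrite !in_setC => yd yr; apply/negP => h; have := desc_child nE yr h; by rewrite (negbTE yd).
have xS : x \in S by rewrite in_setC.
have c := conn_up nE rS sub cl xS.
rewrite (sym_connect_sym (adj_inS sym _)) in c.
apply: connect_sub c => y z /and3P [yd zd a]; apply: connect1.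
rewrite /adj_in a !inE andbT.
rewrite !in_setC in yd zd.
by apply/andP; split; [apply: contraNneq yd|apply: contraNneq zd] => ->; exact: desc_refl.
Qed.

Lemma N_sub x : N x \subset p x |: ch x.
Proof.
apply/subsetP => w; rewrite inE => a; rewrite !inE.
case/orP: (edge_par sym irr conn nE r a) => /andP[xr /eqP e]; first by rewrite e eqxx.
by rewrite xr e eqxx orbT.
Qed.
Lemma ch_N x : ch x \subset N x.
Proof.
apply/subsetP => d; rewrite !inE => /andP[dr /eqP e]; rewrite sym -e; exact: adjp.
Qed.
Lemma pch x : x != r -> p x \notin ch x.
Proof.
move=> xr; rewrite inE; apply/negP => /andP[pr /eqP e].
have h1 := dep_p conn nE xr; have h2 := dep_p conn nE pr; rewrite e in h2.
have := dep_pos conn nE xr; lia.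
Qed.
Lemma deg_nr x : x != r -> deg adj x = (#|ch x|).+1.
Proof.
move=> xr; rewrite /deg; have -> : [set w | adj x w] = p x |: ch x.
  apply/eqP; rewrite eqEsubset N_sub /=; apply/subsetP => w; rewrite in_setU1.
  case/orP => [/eqP ->|wc]; first by rewrite inE adjp.
  exact: (subsetP (ch_N x)).
by rewrite cardsU1 (pch xr).
Qed.
Lemma deg_r : deg adj r = #|ch r|.
Proof.
rewrite /deg; have -> : [set w | adj r w] = ch r.
  apply/eqP; rewrite eqEsubset ch_N andbT; apply/subsetP => w wN.
  have := subsetP (N_sub r) w wN; rewrite in_setU1 p_r; case/orP => // /eqP e.
  by move: wN; rewrite inE e irr.
by [].
Qed.
Lemma p_internal y : y != r -> internal adj r -> internal adj (p y).
Proof.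
move=> yr hr; case: (p y =P r) => [-> //|ne].
rewrite /internal deg_nr; last by apply/eqP.
have : y \in ch (p y) by rewrite inE yr eqxx.
by move=> yc; rewrite ltnS card_gt0; apply/set0Pn; exists y.
Qed.

Lemma sum_ch : \sum_t #|ch t| = #|T|.-1.
Proof.
symmetry; rewrite -(cardsC1 r) -sum1_card (partition_big p predT) //=.
apply: eq_bigr => t _; rewrite -sum1_card; apply: eq_bigl => d.
by rewrite !inE.
Qed.

Lemma card_I : #|[set x | internal adj x]| = \sum_t (internal adj t : nat).
Proof.
rewrite -sum1_card big_mkcond /=; apply: eq_bigr => t _; rewrite inE.
by case: (internal adj t).
Qed.

Lemma count_I : internal adj r -> (2 * #|[set x | internal adj x]|).+1 <= #|T|.-1.
Proof.
move=> hr; rewrite -sum_ch card_I big_distrr /=.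
rewrite (bigD1 r) //= [X in _ <= X](bigD1 r) //= hr.
have -> : #|ch r| = deg adj r by rewrite deg_r.
have h3 := hT3 hr.
rewrite -addSn; apply: leq_add; first by [].
apply: leq_sum => t tr; case: (boolP (internal adj t)) => it //=.
by have := hT3 it; rewrite deg_nr //; lia.
Qed.

Lemma Lf_card : #|Lf| + #|[set x | internal adj x]| = #|T|.
Proof.
have -> : Lf = ~: [set x | internal adj x] by apply/setP => x; rewrite !inE.
by rewrite addnC cardsC.
Qed.

Definition Q t := [set S : {set T} | [&& t \in S, S \subset desc t &
  [forall x in S, (x != t) ==> (p x \in S)]]].

Lemma abar_le : alphabar_v adj r <= \sum_(t in [set~ r]) #|Q t|.
Proof.
rewrite /alphabar_v -sum1_card.
apply: (@leq_trans (\sum_(S in [set S | subtree adj S & r \notin S])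
   \sum_(t in [set~ r]) (S \in Q t))).
  apply: leq_sum => S; rewrite inE => /andP[st rS].
  case: (top_exists sym irr conn nE st rS) => t tS /andP[tr sub].
  rewrite (bigD1 t) ?in_setC1 //=.
  have -> : S \in Q t.
    rewrite inE tS sub /=; apply/forallP => x; apply/implyP => xS; apply/implyP => xt.
    exact: (closed_of_conn sym irr nE (andP st).2 tS sub xS xt).
  by [].
rewrite exchange_big /=; apply: leq_sum => t _.
apply: (@leq_trans (\sum_S (S \in Q t))).
  rewrite [X in X <= _]big_mkcond /=; apply: leq_sum => S _.
  by case: (S \in [set S | _]).
rewrite -sum1_card [X in _ <= X]big_mkcond /=; apply: leq_sum => S _.
by case: (S \in Q t).
Qed.

Lemma Q_inj t : t != r -> internal adj r ->
  #|Q t| * 2 ^ #|Lf :\: desc t| <= alpha_v adj r.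
Proof.
move=> tr hr.
set D0 := Lf :\: desc t.
pose F := fun q : {set T} * {set T} => q.1 :|: (~: desc t :\: q.2).
have hQ : forall S, S \in Q t -> [/\ t \in S, S \subset desc t &
    forall x, x \in S -> x != t -> p x \in S].
  move=> S; rewrite inE => /and3P[tS sub /forallP cl]; split => // x xS xt.
  by have := cl x; rewrite xS xt.
have hD : forall D, D \in powerset D0 -> forall x, x \in D -> (x \in Lf) && (x \notin desc t).
  move=> D; rewrite powersetE => /subsetP sD x /sD; rewrite /D0 !inE.
  by case/andP => -> ->.
have inj : {in setX (Q t) (powerset D0) &, injective F}.
  move=> [S1 D1] [S2 D2]; rewrite !in_setX /= => /andP[q1 d1] /andP[q2 d2] e.
  have [_ s1 _] := hQ _ q1; have [_ s2 _] := hQ _ q2.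
  have h1 := hD _ d1; have h2 := hD _ d2.
  suff [-> ->] : S1 = S2 /\ D1 = D2 by [].
  split; apply/setP => x; move: (congr1 (fun X : {set T} => x \in X) e);
  rewrite /F /= !in_setU !in_setD !in_setC;
  move: (introT implyP (h1 x)) (introT implyP (h2 x))
    (introT implyP (subsetP s1 x)) (introT implyP (subsetP s2 x));
  case: (x \in desc t); case: (x \in S1); case: (x \in S2);
  case: (x \in D1); case: (x \in D2); case: (x \in Lf) => //=.
have img : F @: setX (Q t) (powerset D0) \subset [set S | subtree adj S & r \in S].
  apply/subsetP => _ /imsetP [[S D] + ->]; rewrite in_setX /= => /andP [qS dD].
  have [tS sub cl] := hQ _ qS; have hd := hD _ dD.
  have rD : r \notin D.
    by apply/negP => /hd /andP[]; rewrite inE hr.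
  have rF : r \in F (S, D) by rewrite /F /= !in_setU !in_setD !in_setC rD r_notin_desc ?orbT.
  rewrite inE rF andbT /subtree; apply/andP; split; first by apply/set0Pn; exists r.
  apply: (conn_of_closed sym nE rF (t := r)).
    by apply/subsetP => y _; exact: desc_r.
  move=> x; rewrite /F /= !in_setU !in_setD !in_setC => /orP[xS|/andP[xD xd]] xr.
    case: (x =P t) => [-> | /eqP xt]; last by rewrite cl.
    apply/orP; right; rewrite (not_desc_p conn nE tr) andbT.
    by apply/negP => /hd /andP[]; rewrite inE p_internal.
  apply/orP; right; apply/andP; split.
    by apply/negP => /hd /andP[]; rewrite inE p_internal.
  by apply/negP => h; have := desc_child nE xr h; rewrite (negbTE xd).
have := subset_leq_card img; rewrite card_in_imset // cardsX card_powerset.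
by rewrite /alpha_v.
Qed.
End Count.

Section Final.
Variables (T : finType) (adj : rel T).
Hypothesis sym : symmetric adj.
Hypothesis irr : irreflexive adj.
Hypothesis conn : forall x y, connect adj x y.
Hypothesis nE : #|[set q : T * T | adj q.1 q.2]| %/ 2 = #|T| - 1.
Hypothesis hT3 : forall v, internal adj v -> 3 <= deg adj v.

Lemma adj_ch r y : adj r y -> y \in ch conn r r.
Proof.
move=> a; case/orP: (edge_par sym irr conn nE r a); first by rewrite eqxx.
by case/andP => yr /eqP e; rewrite inE yr -e eqxx.
Qed.

Lemma ch_disj r d u x : d \in ch conn r r -> u \in ch conn r r ->
  x \in desc conn r d -> x \in desc conn r u -> d = u.
Proof.
move=> dc uc xd xu.
by case: (desc_ch nE dc xd) => _ _ <-; case: (desc_ch nE uc xu) => _ _ ->.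
Qed.

Lemma centroid (v0 : T) : exists v, forall c, adj v c ->
  2 * #|Lf adj :&: B adj v c| <= #|Lf adj|.
Proof.
pose bad := [set q : T * T | adj q.1 q.2 && (#|Lf adj| < 2 * #|Lf adj :&: B adj q.1 q.2|)].
case: (set_0Vmem bad) => [e|[q qb]].
  exists v0 => c a; have : (v0, c) \notin bad by rewrite e in_set0.
  by rewrite /bad inE /= a /= -leqNgt.
case: (arg_minnP (fun q : T * T => #|B adj q.1 q.2|) qb) => -[u c] /= qb' qmin.
exists c => y a.
have qb2 : (u, c) \in bad := qb'.
have uc : u \in ch conn c c.
  by apply: adj_ch; move: qb2; rewrite /bad inE /= sym => /andP[].
have hu := B_compl' sym irr nE uc.
have ur : u != c by move: uc; rewrite inE => /andP[].
have pu : p conn c u = c by move: uc; rewrite inE => /andP[_ /eqP].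
move: qb2; rewrite /bad inE /= => /andP[_ big].
case: (y =P u) => [->|yu].
  have hB := desc_B sym irr conn nE ur; rewrite pu in hB; rewrite -hB.
  move: big; rewrite hu.
  have := cardsID (desc conn c u) (Lf adj); rewrite setDE; lia.
have yc := adj_ch a.
have yr : y != c by move: yc; rewrite inE => /andP[].
have py : p conn c y = c by move: yc; rewrite inE => /andP[_ /eqP].
have hB := desc_B sym irr conn nE yr; rewrite py in hB; rewrite -hB.
have sub : desc conn c y \subset B adj u c.
  rewrite hu; apply/subsetP => x xy; rewrite in_setC; apply/negP => xu.
  by apply: yu; exact: (ch_disj yc uc xy xu).
have lt : #|desc conn c y| < #|B adj u c|.
  apply: proper_card; rewrite properE sub /=; apply/subsetPn; exists c.
    by rewrite hu inE r_notin_desc.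
  exact: r_notin_desc.
have nb : (c, y) \notin bad.
  apply/negP => /qmin /=; rewrite -hB; lia.
by move: nb; rewrite /bad inE /= a /= -leqNgt -hB.
Qed.

Section G.
Variable r : T.
Local Notation desc := (desc conn r).
Local Notation ch := (ch conn r).
Definition Lc t := #|Lf adj :&: desc t|.
Lemma Lc_sum t : Lc t = \sum_(x in desc t) (x \in Lf adj).
Proof.
rewrite /Lc -sum1_card big_mkcond [RHS]big_mkcond /=; apply: eq_bigr => x _.
by rewrite in_setI; case: (x \in Lf adj); case: (x \in desc t).
Qed.
Definition G t := \sum_(x in desc t) 2 ^ Lc x.

Lemma desc_ch_sub d t : d \in ch t -> #|desc d| < #|desc t|.
Proof.
move=> dc; apply: proper_card; rewrite properE; apply/andP; split.
  apply/subsetP => x xd. exact: (desc_trans nE xd (ch_desc nE dc)).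
apply/subsetPn; exists t; first exact: desc_refl.
apply/negP => /desc_dep; rewrite (ch_dep nE dc); lia.
Qed.

Lemma G_bound : forall t, t != r -> 0 < Lc t /\ G t + 4 <= 3 * 2 ^ Lc t.
Proof.
suff H : forall n t, #|desc t| < n -> t != r -> 0 < Lc t /\ G t + 4 <= 3 * 2 ^ Lc t.
  by move=> t; apply: H (ltnSn _).
elim => // n IH t hn tr.
have eL : Lc t = (t \in Lf adj) + \sum_(d in ch t) Lc d.
  by rewrite Lc_sum (sum_desc conn nE); congr (_ + _); apply: eq_bigr => d _; rewrite Lc_sum.
have eG : G t = 2 ^ Lc t + \sum_(d in ch t) G d by rewrite /G (sum_desc conn nE).
have dg := deg_nr sym irr conn nE tr.
case: (set_0Vmem (ch t)) => [ch0|[d0 d0c]].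
  have leaf : t \in Lf adj by rewrite inE /internal dg ch0 cards0.
  by rewrite eG eL ch0 !big_set0 leaf.
have nleaf : t \notin Lf adj.
  rewrite inE negbK /internal dg ltnS card_gt0; apply/set0Pn; by exists d0.
have k2 : 2 <= #|ch t|.
  have ti : internal adj t by move: nleaf; rewrite inE negbK.
  by have := hT3 ti; rewrite dg.
have IHd : forall d, d \in ch t -> 0 < Lc d /\ G d + 4 <= 3 * 2 ^ Lc d.
  move=> d dc; apply: IH; first by have := desc_ch_sub dc; lia.
  by move: dc; rewrite inE => /andP[].
rewrite (negbTE nleaf) add0n in eL.
split.
  by rewrite eL (bigD1 d0) //=; have := (IHd d0 d0c).1; lia.
rewrite eG eL -!big_enum /=.
apply: N1; last by rewrite -cardE.
by move=> d; rewrite mem_enum => /IHd.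
Qed.
End G.

Lemma main_core (w0 : T) : internal adj w0 -> 30 <= #|T| ->
  exists v, internal adj v /\ #|T| * alphabar_v adj v <= 2 * alpha_v adj v.
Proof.
move=> hw0 n30.
have [v hv] := centroid w0.
exists v.
set L := #|Lf adj|.
have cntw := count_I sym irr conn nE hT3 hw0.
have hLI := Lf_card adj.
have hL : #|T| + 2 <= 2 * L by rewrite /L; lia.
have dv : desc conn v v = setT by apply/setP => x; rewrite in_setT desc_r.
have chv : forall c, c \in ch conn v v -> 2 * Lc v c <= L.
  move=> c cc; have cr : c != v by move: cc; rewrite inE => /andP[].
  have pc : p conn v c = v by move: cc; rewrite inE => /andP[_ /eqP].
  rewrite /Lc (desc_B sym irr conn nE cr) pc; apply: hv.
  by rewrite sym -{1}pc; exact: adjp.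
have eLv : L = (v \in Lf adj) + \sum_(c in ch conn v v) Lc v c.
  have -> : L = Lc v v by rewrite /Lc dv setIT.
  by rewrite Lc_sum (sum_desc conn nE); congr (_ + _); apply: eq_bigr => d _; rewrite Lc_sum.
have s2 : 2 * \sum_(c in ch conn v v) Lc v c <= #|ch conn v v| * L.
  rewrite big_distrr /= -sum1_card big_distrl /=; apply: leq_sum => c cc.
  by rewrite mul1n; apply: chv.
have vint : internal adj v.
  apply/negPn/negP => nv.
  have d1 : #|ch conn v v| <= 1 by move: nv; rewrite /internal (deg_r sym irr conn nE v) -ltnNge.
  have vL : (v \in Lf adj) <= 1 by case: (v \in Lf adj).
  have : 2 * \sum_(c in ch conn v v) Lc v c <= L.
    by apply: (leq_trans s2); rewrite -{2}[L]mul1n leq_mul2r d1 orbT.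
  lia.
split => //.
have vnL : (v \in Lf adj) = false by rewrite inE vint.
rewrite vnL add0n in eLv.
set h := L./2.
set ab := alphabar_v adj v; set al := alpha_v adj v.
set S := \sum_(t in [set~ v]) 2 ^ Lc v t.
have ab2 : ab * 2 ^ L <= al * S.
  apply: (@leq_trans ((\sum_(t in [set~ v]) #|Q conn v t|) * 2 ^ L)).
    by rewrite leq_mul2r (abar_le sym irr conn nE v) orbT.
  rewrite big_distrl big_distrr /=; apply: leq_sum => t; rewrite in_setC1 => tv.
  have q := Q_inj sym irr conn nE tv vint.
  have e : 2 ^ L = 2 ^ #|Lf adj :\: desc conn v t| * 2 ^ Lc v t.
    by rewrite -expnD /L -(cardsID (desc conn v t) (Lf adj)) /Lc addnC.
  by rewrite e mulnA leq_mul2r q orbT.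
have eS : S = \sum_(c in ch conn v v) G v c.
  have := sum_desc conn nE v (fun x => 2 ^ Lc v x) v; rewrite dv.
  rewrite (bigD1 v) //= => /eqP; rewrite eqn_add2l => /eqP <-.
  by apply: eq_bigl => x; rewrite in_setC1 in_setT.
have hS : h * S <= 3 * L * 2 ^ h.
  rewrite eS big_distrr /=.
  apply: (@leq_trans (\sum_(c in ch conn v v) 3 * Lc v c * 2 ^ h)).
    apply: leq_sum => c cc.
    have cr : c != v by move: cc; rewrite inE => /andP[].
    have [g1 g2] := @G_bound v c cr.
    have ch2 : Lc v c <= h by rewrite /h geq_half_double -mul2n chv.
    have := N2 g1 ch2.
    move: g2; move: (G v c) (2 ^ Lc v c) (2 ^ h) (Lc v c) => Gc X Y l g2 hn2.
    nia.
  by rewrite -big_distrl -big_distrr -eLv.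
have hpos : 0 < h * 2 ^ L by rewrite muln_gt0 expn_gt0 /h half_gt0 andbT; lia.
have h4 := @N4 L #|T| ltac:(lia) hL.
rewrite -/h expnS in h4.
rewrite -(leq_pmul2r hpos).
move: ab2 hS h4; move: (2 ^ L) (2 ^ h) => P Ph ab2 hS h4.
set n := #|T|.
apply: (@leq_trans ((n * h) * (ab * P))); first by apply: eq_leq; nia.
apply: (@leq_trans ((n * h) * (al * S))); first by rewrite leq_mul2l ab2 orbT.
apply: (@leq_trans ((al * n) * (h * S))); first by apply: eq_leq; nia.
apply: (@leq_trans ((al * n) * (3 * L * Ph))); first by rewrite leq_mul2l hS orbT.
apply: (@leq_trans (al * (3 * L * n * Ph))); first by apply: eq_leq; nia.
apply: (@leq_trans (al * (h * (2 * P)))); first by rewrite leq_mul2l h4 orbT.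
by apply: eq_leq; nia.
Qed.

End Final.


Theorem mainTheorem10 (T : finType) (adj : rel T) :
  in_T3 adj -> 30 <= #|T| ->
  (exists u w, adj u w /\ 2 * alpha_e adj u w >= #|T| * alphabar_e adj u w)
  \/ (exists v, internal adj v /\ 2 * alpha_v adj v >= #|T| * alphabar_v adj v).
Proof.
move=> [[[sym irr] [_ [cT nE]]] [[w0 hw0] hT3]] n30.
have conn : forall x y, connect adj x y.
  move=> x y; move/forallP: cT => /(_ x) /implyP /(_ (in_setT x)) /forallP /(_ y).
  move=> /implyP /(_ (in_setT y)).
  by rewrite (@eq_connect _ _ adj) // => a b; rewrite /adj_in !in_setT.
right; have [v [vi hv]] := main_core sym irr conn nE hT3 hw0 n30.
by exists v.
Qed.
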